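(* Let $d\ge 2$. Let $\mathfrak{V}=\{V_0,\dots,V_{d-1}\}$ and $\mathfrak{W}=\{W_0,\dots,W_{d-1}\}$ be two bases of the same $d$-dimensional subspace $\mathcal{S}$ of $\mathcal{L}(\mathbb{C}^d)$. Assume that each basis consists of unitary operators and is orthogonal with respect to the Hilbert–Schmidt inner product: $$\operatorname{Tr}(V_i^\dagger V_j)=d\,\delta_{ij},\qquad \operatorname{Tr}(W_i^\dagger W_j)=d\,\delta_{ij}.$$ Suppose that for every pair $m,n\in\{0,\dots,d-1\}$ the pair $V_n,W_m$ saturates the maximal bound. Then $\mathfrak{V}$ and $\mathfrak{W}$ are mutually unbiased, i.e. $$|\operatorname{Tr}(V_n^\dagger W_m)|=\sqrt d\quad\text{for all } m,n.$$
   Context: For unitaries $V,W$ on $\mathbb{C}^d$ and an orthonormal basis $\{|\chi_i\rangle\}$ of $\mathbb{C}^d$, the entropic uncertainty bound for testing $V$ and $W$ with measurement $\{|\chi_i\rangle\langle\chi_i|\}$ is $-\log\max_{i,j}|\langle\chi_i|WV^\dagger|\chi_j\rangle|^2$. The pair $V,W$ saturates the maximal bound if there is some tester, i.e. some orthonormal basis $\{|\chi_i\rangle\}_{i=1}^d$ (depending on the pair), for which this bound equals $\log d$. Equivalently, the bases $\{|\chi_i\rangle\}$ and $\{WV^\dagger|\chi_j\rangle\}$ are mutually unbiased: $$|\langle\chi_i|WV^\dagger|\chi_j\rangle|=1/\sqrt d\quad\text{for all } i,j.$$ *)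

(* Defs.v *)
From HB Require Import structures.
From mathcomp Require Import all_boot all_order all_algebra.
Set Implicit Arguments. Unset Strict Implicit. Unset Printing Implicit Defensive.
Import Order.TTheory GRing.Theory Num.Theory.
Local Open Scope ring_scope.

(* Complex scalars: an arbitrary numClosedFieldType C (e.g. algC). *)

Definition adj (C : numClosedFieldType) (m n : nat) (A : 'M[C]_(m, n)) : 'M[C]_(n, m) :=
  (map_mx Num.conj A)^T.

Definition unitary (C : numClosedFieldType) (d : nat) (A : 'M[C]_d) : Prop :=
  adj A *m A = 1%:M /\ A *m adj A = 1%:M.

Definition orthonormal_basis (C : numClosedFieldType) (d : nat) (chi : 'I_d -> 'cV[C]_d) : Prop :=
  forall i j, (adj (chi i) *m chi j) 0 0 = (i == j)%:R.

Definition braket (C : numClosedFieldType) (d : nat) (chi : 'I_d -> 'cV[C]_d) (M : 'M[C]_d) i j : C :=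
  (adj (chi i) *m M *m chi j) 0 0.

(* The entropic bound -log max_{i,j} |<chi_i|W V^dagger|chi_j>|^2 equals log d,
   i.e. max_{i,j} |<chi_i|W V^dagger|chi_j>|^2 = 1/d (written out as the maximum). *)
Definition saturates_max_bound (C : numClosedFieldType) (d : nat) (V W : 'M[C]_d) : Prop :=
  exists chi : 'I_d -> 'cV[C]_d,
    orthonormal_basis chi /\
    (forall i j, `|braket chi (W *m adj V) i j| ^+ 2 <= (d%:R)^-1) /\
    (exists i j, `|braket chi (W *m adj V) i j| ^+ 2 = (d%:R)^-1).

(* The subspace of L(C^d) spanned by a family, as the row space of the matrix
   whose rows are the vectorized operators. *)
Definition span_mx (C : numClosedFieldType) (d : nat) (V : 'I_d -> 'M[C]_d) : 'M[C]_(d, d * d) :=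
  \matrix_(i < d) mxvec (V i).

(* Main.v *)
Require Import Defs.
From HB Require Import structures.
From mathcomp Require Import all_boot all_order all_algebra.
Import Order.TTheory GRing.Theory Num.Theory.
Local Open Scope ring_scope.

Lemma tr_onb (C : numClosedFieldType) (d : nat) (chi : 'I_d -> 'cV[C]_d)
  (hchi : orthonormal_basis chi) (U : 'M[C]_d) :
  \tr U = \sum_i braket chi U i i.
Proof.
pose X : 'M[C]_d := \matrix_(i, j) chi j i 0.
have hX : adj X *m X = 1%:M.
  apply/matrixP => i j; rewrite [RHS]mxE -hchi !mxE; apply: eq_bigr => k _; rewrite !mxE.
  by [].
have hX' := mulmx1C hX.
have -> : \tr U = \tr (adj X *m U *m X) by rewrite mxtrace_mulC mulmxA hX' mul1mx.
rewrite /mxtrace; apply: eq_bigr => i _; rewrite /braket !mxE.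
apply: eq_bigr => k _; rewrite !mxE; congr (_ * _).
by apply: eq_bigr => l _; rewrite !mxE.
Qed.

Lemma tr_adjC (C : numClosedFieldType) (d : nat) (A B : 'M[C]_d) :
  \tr (adj A *m B) = (\tr (adj B *m A))^*.
Proof.
rewrite /mxtrace rmorph_sum; apply: eq_bigr => i _; rewrite !mxE rmorph_sum.
apply: eq_bigr => k _; rewrite !mxE.
by rewrite rmorphM /= conjCK mulrC.
Qed.

Lemma sat_bound (C : numClosedFieldType) (d : nat) (hd : (0 < d)%N) (V W : 'M[C]_d) :
  saturates_max_bound V W -> `|\tr (adj V *m W)| ^+ 2 <= d%:R.
Proof.
case=> chi [hchi [hle _]].
rewrite mxtrace_mulC (@tr_onb _ _ _ hchi).
set s := sqrtC (d%:R^-1 : C).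
have s0 : 0 <= s by rewrite sqrtC_ge0 invr_ge0 ler0n.
have hb : forall i, `|braket chi (W *m adj V) i i| <= s.
  move=> i; rewrite -(@ler_pXn2r _ 2) // ?nnegrE ?normr_ge0 //.
  by rewrite sqrtCK hle.
have h1 : `|\sum_i braket chi (W *m adj V) i i| <= s *+ d.
  apply: le_trans (ler_norm_sum _ _ _) _.
  apply: le_trans (ler_sum _ (fun i _ => hb i)) _.
  by rewrite sumr_const card_ord.
have d0 : (d%:R : C) != 0 by rewrite pnatr_eq0 -lt0n.
rewrite -(@ler_pXn2r _ 2) ?nnegrE ?normr_ge0 ?mulrn_wge0 // in h1.
apply: le_trans h1 _.
by rewrite -[s *+ d]mulr_natl exprMn sqrtCK expr2 -mulrA mulfV // mulr1.
Qed.

Theorem proposition2 (C : numClosedFieldType) (d : nat) (hd : (2 <= d)%N)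
    (V W : 'I_d -> 'M[C]_d)
    (hspan : (span_mx V == span_mx W)%MS)
    (hVu : forall i, unitary (V i)) (hWu : forall i, unitary (W i))
    (hVo : forall i j, \tr (adj (V i) *m V j) = d%:R * (i == j)%:R)
    (hWo : forall i j, \tr (adj (W i) *m W j) = d%:R * (i == j)%:R)
    (hsat : forall m n, saturates_max_bound (V n) (W m)) :
  forall m n, `|\tr (adj (V n) *m W m)| = sqrtC d%:R.
Proof.
move=> m n.
have hd0 : (0 < d)%N by apply: leq_trans hd.
case/andP: hspan => _ hWV.
have := row_sub m (span_mx W); rewrite rowK => /submx_trans/(_ hWV).
case/submxP => c hc.
have hWm : W m = \sum_k c 0 k *: V k.
  apply: (can_inj mxvecK); rewrite hc mulmx_sum_row linear_sum.
  by apply: eq_bigr => k _; rewrite linearZ /= rowK.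
pose t k := \tr (adj (V k) *m W m).
have ht : forall k, t k = c 0 k * d%:R.
  move=> k; rewrite /t hWm mulmx_sumr linear_sum (bigD1 k) //= big1 => [|j hj].
    by rewrite -scalemxAr linearZ /= hVo eqxx mulr1 addr0.
  by rewrite -scalemxAr linearZ /= hVo eq_sym (negbTE hj) mulr0 mulr0.
have e : d%:R = \sum_k c 0 k * (t k)^*.
  have := hWo m m; rewrite eqxx mulr1 {2}hWm mulmx_sumr linear_sum => <-.
  by apply: eq_bigr => k _; rewrite -scalemxAr linearZ /= tr_adjC.
have hnorm : d%:R * d%:R = \sum_k `|t k| ^+ 2.
  rewrite {2}e mulr_sumr; apply: eq_bigr => k _.
  by rewrite normCK !(ht k) mulrCA mulrA.
have hle : forall k, `|t k| ^+ 2 <= d%:R by move=> k; apply: sat_bound (hsat m k).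
have h0 : \sum_k (d%:R - `|t k| ^+ 2) = 0.
  by rewrite sumrB sumr_const card_ord -[_ *+ d]mulr_natr -hnorm subrr.
have hk : d%:R - `|t n| ^+ 2 = 0.
  by apply: (psumr_eq0P _ h0) => // k _; rewrite subr_ge0 hle.
rewrite -/(t n) -(sqrCK (normr_ge0 (t n))).
by rewrite (subr0_eq hk).
Qed.
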